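(* Let $A\ge2$, $H\ge5$ and $S\ge A^{(1-1/e)H}$. Then there exists an episodic tabular MDP with $S$ states, $A$ actions, horizon $H$ and deterministic rewards in $\{0,1\}$ such that $$\frac{V^{0,*}}{V^{T,*}}\le\frac{2}{(A-1)^{(1-1/e)H-3}}.$$ Here $V^{0,*}$ is the optimal value of Markovian (no-lookahead) policies and $V^{T,*}$ is the optimal value of one-step transition-lookahead policies.
   Context: Episodic tabular MDP: finite state space of size $S$, finite action space of size $A$, horizon $H$, initial state distribution, transition kernels $P_h(\cdot\mid s,a)$, and non-negative rewards. The value of a policy is the expected sum of rewards over steps $1,\dots,H$. A no-lookahead (Markovian) policy chooses $a_h$ based only on $h$ and $s_h$. For each $(h,s,a)$, the next state $s'_{h}(s,a)\sim P_h(\cdot\mid s,a)$ is drawn independently across $h$, and transitions are independent of rewards. If the agent is at $s_h$ and plays $a_h$, then $s_{h+1}=s'_h(s_h,a_h)$. A one-step transition-lookahead policy, at step $h$ in state $s_h$, observes the realized next states $\{s'_h(s_h,a)\}_{a\in\mathcal A}$ for all actions before choosing $a_h$. It has no reward lookahead. *)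

(* Defs.v *)
From HB Require Import structures.
From mathcomp Require Import all_boot all_order all_algebra.
From mathcomp Require Import all_classical all_reals all_analysis.
Set Implicit Arguments. Unset Strict Implicit. Unset Printing Implicit Defensive.
Import Order.TTheory GRing.Theory Num.Theory.
Local Open Scope ring_scope.

Record mdp (R : realType) (S A H : nat) := MDP {
  init  : {ffun 'I_S -> R};
  trans : 'I_H -> 'I_S -> 'I_A -> {ffun 'I_S -> R};
  rew   : 'I_H -> 'I_S -> 'I_A -> R
}.

Definition is_distr (R : realType) (T : finType) (p : {ffun T -> R}) : Prop :=
  (forall x, 0 <= p x) /\ \sum_(x : T) p x = 1.

Definition valid_mdp01 (R : realType) (S A H : nat) (M : mdp R S A H) : Prop :=
  is_distr (init M) /\
  (forall h s a, is_distr (trans M h s a)) /\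
  (forall h s a, rew M h s a = 0 \/ rew M h s a = 1).

Definition markov_policy (S A H : nat) := {ffun 'I_H -> {ffun 'I_S -> 'I_A}}.

Definition markov_step (R : realType) (S A H : nat) (M : mdp R S A H)
  (pi : markov_policy S A H) (h : 'I_H) (V : 'I_S -> R) : 'I_S -> R :=
  fun s => let a := pi h s in
    rew M h s a + \sum_(s' : 'I_S) trans M h s a s' * V s'.

(* backward induction: foldr over steps 0,..,H-1 composes step 0 outermost *)
Definition markov_value (R : realType) (S A H : nat) (M : mdp R S A H)
  (pi : markov_policy S A H) : R :=
  \sum_(s : 'I_S) init M s *
     foldr (markov_step M pi) (fun _ => 0) (enum 'I_H) s.

Definition opt_markov (R : realType) (S A H : nat) (M : mdp R S A H) : R :=
  \big[Num.max/0]_(pi : markov_policy S A H) markov_value M pi.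

(* One-step transition-lookahead policies: at step h in state s, the agent
   observes the vector sigma = (s'_h(s,a))_a of realized next states for all
   actions and chooses a_h = pi h s sigma. *)
Definition lookahead_policy (S A H : nat) :=
  {ffun 'I_H -> {ffun 'I_S -> {ffun {ffun 'I_A -> 'I_S} -> 'I_A}}}.

Definition lookahead_step (R : realType) (S A H : nat) (M : mdp R S A H)
  (pi : lookahead_policy S A H) (h : 'I_H) (V : 'I_S -> R) : 'I_S -> R :=
  fun s => \sum_(sigma : {ffun 'I_A -> 'I_S})
     (\prod_(a : 'I_A) trans M h s a (sigma a)) *
     (let a := pi h s sigma in rew M h s a + V (sigma a)).

Definition lookahead_value (R : realType) (S A H : nat) (M : mdp R S A H)
  (pi : lookahead_policy S A H) : R :=
  \sum_(s : 'I_S) init M s *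
     foldr (lookahead_step M pi) (fun _ => 0) (enum 'I_H) s.

Definition opt_lookahead (R : realType) (S A H : nat) (M : mdp R S A H) : R :=
  \big[Num.max/0]_(pi : lookahead_policy S A H) lookahead_value M pi.

(* Main.v *)
Require Import Defs.
From HB Require Import structures.
From mathcomp Require Import all_boot all_order all_algebra.
From mathcomp Require Import all_classical all_reals all_analysis.
From mathcomp Require Import ring lra.
Import Order.TTheory GRing.Theory Num.Theory.
Local Open Scope ring_scope.

Section Ex.
Variable R : realType.

Lemma sum_ind (T : finType) (j : T) (F : T -> R) :
  \sum_(i : T) (i == j)%:R * F i = F j.
Proof.
rewrite (bigD1 j) //= eqxx mul1r big1 ?addr0 // => i /negbTE ->; by rewrite mul0r.
Qed.

Arguments sum_ind {T}.
Lemma sum_indc (T : finType) (j : T) (c : R) :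
  \sum_(i : T) (i == j)%:R * c = c.
Proof. exact: (sum_ind j (fun _ => c)). Qed.
Arguments sum_indc {T}.
Definition bS {n : nat} : 'I_n.+2 := inord 1.

Lemma bS_neq0 n : (@bS n == ord0) = false.
Proof. by apply/negbTE; rewrite -(inj_eq val_inj) /= inordK. Qed.

Definition tr (n : nat) (p : R) (s : 'I_n.+2) : {ffun 'I_n.+2 -> R} :=
  [ffun s' => if s == ord0 then (s' == ord0)%:R * p + (s' == bS)%:R * (1 - p)
              else (s' == bS)%:R].

Arguments tr {n}.
Definition Mex (n A H : nat) (p : R) : mdp R n.+2 A H.+1 :=
  @MDP R n.+2 A H.+1 [ffun s => (s == ord0)%:R] (fun _ s _ => tr p s)
      (fun h s _ => ((h == ord_max) && (s == ord0))%:R).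

Lemma sum_ind1 (T : finType) (j : T) : \sum_(i : T) (i == j)%:R = 1 :> R.
Proof. by rewrite (eq_bigr (fun i => (i == j)%:R * 1)) ?sum_indc // => i _; rewrite mulr1. Qed.
Arguments sum_ind1 {T}.

Lemma sum_tr n p s : \sum_j @tr n p s j = 1.
Proof.
under eq_bigr do rewrite ffunE.
case: (s == ord0); last exact: sum_ind1.
rewrite big_split /= -!big_distrl /= !sum_ind1 !mul1r.
by rewrite addrC subrK.
Qed.

Lemma tr_ge0 n p s j : 0 <= p <= 1 -> 0 <= @tr n p s j.
Proof.
move=> /andP [p0 p1]; rewrite ffunE; case: (s == ord0).
  by rewrite addr_ge0 // mulr_ge0 // subr_ge0.
by [].
Qed.

Lemma valid_Mex n A H p : 0 <= p <= 1 -> valid_mdp01 (@Mex n A H p).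
Proof.
move=> hp; split; [|split].
- split; first by move=> x; rewrite ffunE.
  by under eq_bigr do rewrite ffunE; exact: sum_ind1.
- move=> h s a; split; [move=> x; exact: tr_ge0| exact: sum_tr].
- move=> h s a /=; case: (_ && _); [by right | by left].
Qed.

Lemma tr0 n p s : @tr n p s ord0 = if s == ord0 then p else 0.
Proof.
rewrite ffunE eqxx (eq_sym ord0 bS) bS_neq0; case: (s == ord0); by rewrite ?mul1r ?mul0r ?addr0.
Qed.

Lemma mk_inv n A H p (pi : markov_policy n.+2 A H.+1) (l : seq 'I_H.+1) (V : 'I_n.+2 -> R) c :
  (forall s, V s = c * (s == ord0)%:R) -> all (fun h => h != ord_max) l ->
  forall s, foldr (markov_step (Mex n A H p) pi) V l s = c * p ^+ size l * (s == ord0)%:R.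
Proof.
move=> HV; elim: l => [|h l IH] /=.
  by move=> _ s; rewrite HV expr0 mulr1.
move=> /andP [hh hl] s; rewrite /markov_step /= (negbTE hh) /= add0r.
under eq_bigr do rewrite IH //.
rewrite (eq_bigr (fun j => (j == ord0)%:R * (tr p s j * (c * p ^+ size l)))); last first.
  by move=> j _; ring.
rewrite (sum_ind ord0 (fun j => tr p s j * (c * p ^+ size l))) /= tr0.
case: (s == ord0); rewrite ?mul0r ?mulr0 // mulr1 exprS; ring.
Qed.

Lemma markov_val n A H p pi : markov_value (@Mex n A H p) pi = p ^+ H.
Proof.
rewrite /markov_value enum_ordSr -cats1 foldr_cat /=.
have H0 : forall s, markov_step (Mex n A H p) pi ord_max (fun _ => 0) s = 1 * (s == ord0)%:R.
  move=> s; rewrite /markov_step /= eqxx /= big1 ?addr0 ?mul1r // => j _; by rewrite mulr0.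
have := @mk_inv n A H p pi _ _ _ H0.
move=> /(_ [seq widen_ord (leqnSn H) i | i <- enum 'I_H]).
rewrite size_map size_enum_ord => Hi.
have Ha : all (fun h => h != ord_max) [seq widen_ord (leqnSn H) i | i <- enum 'I_H].
  apply/allP => x /mapP [i _ ->]; by rewrite -(inj_eq val_inj) /= neq_ltn ltn_ord.
under eq_bigr do rewrite ffunE (Hi Ha).
rewrite (eq_bigr (fun j => (j == ord0)%:R * (1 * p ^+ H))); last first.
  by move=> j _; case: (j == ord0); rewrite ?mulr1 ?mul0r.
by rewrite sum_indc mul1r.
Qed.

Definition pol {n A : nat} (sigma : {ffun 'I_A.+1 -> 'I_n.+2}) : 'I_A.+1 :=
  if [pick a | sigma a == ord0] is Some a then a else ord0.

Definition la_pi (n A H : nat) : lookahead_policy n.+2 A.+1 H.+1 :=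
  [ffun h => [ffun s => [ffun sigma => pol sigma]]].

Lemma pick_ind n A (sigma : {ffun 'I_A.+1 -> 'I_n.+2}) :
  (sigma (pol sigma) == ord0)%:R = 1 - \prod_a (sigma a != ord0)%:R :> R.
Proof.
rewrite /pol; case: pickP => [a Ha | Hn].
  by rewrite Ha (bigD1 a) //= Ha mul0r subr0.
by rewrite Hn big1 ?subrr // => a _; rewrite Hn.
Qed.

Lemma sum_prod_tr n A p s :
  \sum_(sigma : {ffun 'I_A -> 'I_n.+2}) \prod_a tr p s (sigma a) = 1.
Proof.
rewrite -(bigA_distr_bigA (fun (a : 'I_A) j => tr p s j)) /=.
by rewrite big1 // => a _; rewrite sum_tr.
Qed.

Lemma tr_neq n p (j : 'I_n.+2) :
  @tr n p ord0 j * (j != ord0)%:R = @tr n p ord0 j - (j == ord0)%:R * @tr n p ord0 ord0.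
Proof.
case E0 : (j == ord0); rewrite ?(eqP E0) ?eqxx /= ?mulr0n ?mulr1n ?mulr0 ?mulr1 ?subrr ?mul0r ?mul1r ?subr0 ?subrr //.
Qed.

Lemma sum_tr_neq n p : \sum_j @tr n p ord0 j * (j != ord0)%:R = 1 - p.
Proof.
under eq_bigr do rewrite tr_neq.
by rewrite sumrB sum_tr sum_indc tr0 eqxx.
Qed.

Lemma la_sum n A p :
  \sum_(sigma : {ffun 'I_A.+1 -> 'I_n.+2})
     (\prod_a tr p ord0 (sigma a)) * (sigma (pol sigma) == ord0)%:R
  = 1 - (1 - p) ^+ A.+1.
Proof.
under eq_bigr do rewrite pick_ind mulrBr mulr1.
rewrite sumrB sum_prod_tr.
rewrite (eq_bigr (fun sigma : {ffun 'I_A.+1 -> 'I_n.+2} => \prod_a (tr p ord0 (sigma a) * (sigma a != ord0)%:R))); last first.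
  by move=> sigma _; rewrite -big_split.
rewrite -(bigA_distr_bigA (fun (a : 'I_A.+1) j => tr p ord0 j * (j != ord0)%:R)) /=.
by rewrite (eq_bigr (fun _ => 1 - p)) ?prodr_const ?card_ord // => a _; rewrite sum_tr_neq.
Qed.

Lemma la_inv n A H p (l : seq 'I_H.+1) (V : 'I_n.+2 -> R) c :
  0 <= p <= 1 -> 0 <= c ->
  (forall s, c * (s == ord0)%:R <= V s) -> all (fun h => h != ord_max) l ->
  forall s, c * (1 - (1 - p) ^+ A.+1) ^+ size l * (s == ord0)%:R
     <= foldr (lookahead_step (Mex n A.+1 H p) (la_pi n A H)) V l s.
Proof.
move=> hp c0 HV; elim: l => [|h l IH] /=.
  by move=> _ s; rewrite expr0 mulr1.
move=> /andP [hh hl] s; rewrite /lookahead_step /= (negbTE hh) /=.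
set d := c * (1 - (1 - p) ^+ A.+1) ^+ size l.
have d0 : 0 <= d.
  apply: mulr_ge0 => //; apply: exprn_ge0; rewrite subr_ge0.
  case/andP: hp => p0 p1; apply: exprn_ile1; rewrite ?subr_ge0 //.
  by rewrite lerBlDr lerDl.
apply: (@le_trans _ _ (\sum_(sigma : {ffun 'I_A.+1 -> 'I_n.+2})
     (\prod_a tr p s (sigma a)) * (d * (sigma (pol sigma) == ord0)%:R))).
  case: (eqVneq s ord0) => [->|hs]; last first.
    rewrite mulr0n mulr0; apply: sumr_ge0 => sigma _.
    apply: mulr_ge0; [apply: prodr_ge0 => a _; exact: tr_ge0| by rewrite mulr_ge0].
  rewrite mulr1n mulr1.
  under eq_bigr do rewrite mulrCA.
  by rewrite -mulr_sumr la_sum /d exprSr mulrA.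
apply: ler_sum => sigma _; rewrite add0r /la_pi !ffunE.
apply: ler_wpM2l; first by apply: prodr_ge0 => a _; exact: tr_ge0.
exact: IH.
Qed.

Lemma la_val n A H p : 0 <= p <= 1 ->
  (1 - (1 - p) ^+ A.+1) ^+ H <= lookahead_value (@Mex n A.+1 H p) (la_pi n A H).
Proof.
move=> hp.
rewrite /lookahead_value enum_ordSr -cats1 foldr_cat /=.
have H0 : forall s, 1 * (s == ord0)%:R <=
    lookahead_step (Mex n A.+1 H p) (la_pi n A H) ord_max (fun _ => 0) s.
  move=> s; rewrite /lookahead_step /= eqxx /=.
  under eq_bigr do rewrite addr0 mulrC.
  by rewrite -mulr_sumr sum_prod_tr mul1r mulr1.
have Ha : all (fun h => h != ord_max) [seq widen_ord (leqnSn H) i | i <- enum 'I_H].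
  apply/allP => x /mapP [i _ ->]; by rewrite -(inj_eq val_inj) /= neq_ltn ltn_ord.
have Hi := @la_inv n A H p _ _ 1 hp ler01 H0 Ha.
rewrite size_map size_enum_ord in Hi.
rewrite (bigD1 ord0) //= ffunE eqxx mul1r.
have := Hi ord0; rewrite eqxx mulr1n mulr1 mul1r => h1.
apply: le_trans h1 _; rewrite lerDl.
apply: sumr_ge0 => s hs; rewrite ffunE (negbTE hs) mulr0n mul0r //.
Qed.
Lemma bern (p : R) k : 0 <= p <= 1 -> (1 - p) ^+ k * (1 + k%:R * p) <= 1.
Proof.
move=> /andP [p0 p1]; elim: k => [|k IH]; first by rewrite expr0 mul0r addr0 mul1r.
rewrite exprS -natr1.
have Y0 : 0 <= (1 - p) ^+ k by apply: exprn_ge0; rewrite subr_ge0.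
have K0 : 0 <= (k%:R : R) by [].
set Y := (1 - p) ^+ k in Y0 IH *; set K := (k%:R : R) in K0 IH *.
have h : 0 <= Y * (p * p * (K + 1)) by apply: mulr_ge0 => //; apply: mulr_ge0; [apply: mulr_ge0|apply: addr_ge0].
nra.
Qed.

End Ex.
Arguments Mex {R}. Arguments la_val {R}. Arguments bern {R}. Arguments valid_Mex {R}. Arguments markov_val {R}.

Theorem mainTheorem6 (R : realType) (S A H : nat) :
  (2 <= A)%N -> (5 <= H)%N ->
  (A%:R : R) `^ ((1 - (expR 1)^-1) * H%:R) <= S%:R ->
  exists M : mdp R S A H,
    valid_mdp01 M /\
    0 < opt_lookahead M /\
    opt_markov M / opt_lookahead M
      <= 2 / ((A%:R - 1) `^ ((1 - (expR 1)^-1) * H%:R - 3)).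
Proof.
move=> hA hH hS.
set c := 1 - (expR 1)^-1 in hS *.
have e2 : 2 <= expR (1 : R) by have := expR_ge1Dx (1 : R).
have e0 : 0 < expR (1 : R) by apply: expR_gt0.
have c1 : c <= 1 by rewrite /c lerBlDr lerDl invr_ge0 ltW.
have c2 : 1 / 2 <= c.
  rewrite /c lerBrDr -lerBrDl.
  have -> : 1 - 1 / 2 = (2 : R)^-1 by rewrite mul1r; field.
  by rewrite lef_pV2 // posrE.
have hA1 : (1 : R) <= A%:R by rewrite (ler_nat R 1 A) ltnW.
have hAS : (A%:R : R) <= S%:R.
  apply: le_trans hS; apply: le1r_powR => //.
  have H5 : (5 : R) <= H%:R by rewrite (ler_nat R 5 H).
  nra.
have hS2 : (2 <= S)%N by rewrite -(ler_nat R); apply: le_trans hAS; rewrite ler_nat.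
case: S hS hAS hS2 => [|[|n]] // hS hAS _.
case: A hA hS hAS hA1 => [|[|A']] // _ hS hAS hA1.
case: H hH hS c2 => [|H'] // hH hS c2.
set a : R := (A'.+2)%:R.
have a2 : 2 <= a by rewrite /a (ler_nat R 2 A'.+2).
set p : R := (a ^+ 2)^-1.
have pa : p * a ^+ 2 = 1 by rewrite /p mulVf // expf_neq0 // gt_eqF // (lt_le_trans _ a2).
have p0 : 0 <= p by rewrite /p invr_ge0 exprn_ge0 // (le_trans _ a2).
have p1 : p <= 1 by rewrite /p invf_le1 ?exprn_gt0 ?(lt_le_trans _ a2) // expr2; nra.
have hp : 0 <= p <= 1 by rewrite p0 p1.
exists (Mex n A'.+2 H' p).
set q := 1 - (1 - p) ^+ A'.+2.
have hb := bern p A'.+2 hp.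
have Y0 : 0 <= (1 - p) ^+ A'.+2 by apply: exprn_ge0; rewrite subr_ge0.
have hq : p * (a - 1) <= q.
  have hb' : (1 - p) ^+ A'.+2 * (1 + a * p) <= 1 := hb.
  rewrite /q; move: hb' Y0; set y := (1 - p) ^+ A'.+2 => hb' Y0'.
  rewrite expr2 in pa; nra.
have a10 : 0 < a - 1 by lra.
have pp : 0 < p by rewrite /p invr_gt0 exprn_gt0 //; lra.
have pa1 : 0 <= p * (a - 1) by nra.
have q0 : 0 < q by apply: lt_le_trans hq; nra.
have hL : q ^+ H' <= opt_lookahead (Mex n A'.+2 H' p).
  apply: le_trans (la_val n A'.+1 H' p hp) _.
  exact: (le_bigmax _ (fun pi => lookahead_value (Mex n A'.+2 H' p) pi) (la_pi n A'.+1 H')).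
have Q0 : 0 < q ^+ H' by apply: exprn_gt0.
have L0 : 0 < opt_lookahead (Mex n A'.+2 H' p) by apply: lt_le_trans hL.
have hM : opt_markov (Mex n A'.+2 H' p) <= p ^+ H'.
  apply: bigmax_le; first exact: exprn_ge0.
  by move=> pi _; rewrite markov_val.
split; first exact: valid_Mex.
split; first exact: L0.
set X := (a - 1) `^ (c * (H'.+1)%:R - 3).
have X0 : 0 < X by apply: powR_gt0.
have hX : X <= (a - 1) ^+ H'.
  rewrite -(powR_mulrn H' (ltW a10)) /X; apply: ler_powR; first lra.
  have HH : c * (H'.+1)%:R <= (H'.+1)%:R.
    by have := ltr0Sn R H'; nra.
  rewrite -natr1 in HH *; lra.
have P0 : 0 <= p ^+ H' by apply: exprn_ge0.
rewrite ler_pdivrMr //.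
apply: le_trans hM _.
apply: (@le_trans _ _ (2 / X * q ^+ H')); last first.
  by apply: ler_wpM2l => //; apply: divr_ge0 => //; apply: ltW.
rewrite mulrC mulrA ler_pdivlMr //.
apply: (@le_trans _ _ (p ^+ H' * (a - 1) ^+ H')); first exact: ler_wpM2l.
rewrite -exprMn.
apply: (@le_trans _ _ (q ^+ H')); first by apply: lerXn2r => //; rewrite nnegrE ltW.
rewrite ler_pMr //; lra.
Qed.
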